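(* For any $n\in\mathbb{N}$, the monoid $\mathrm{lps}_n$ is finitely presented.
   Context: Let $\mathcal{A}_n=\{1<2<\cdots<n\}$. An lPS tableau is a finite (possibly empty) sequence of nonempty bottom-justified columns of boxes filled with positive integers, such that the entries of each column are strictly decreasing from top to bottom and the bottom entries of the columns form a weakly increasing sequence from left to right. Right insertion of a symbol $a$ into an lPS tableau $B$: if $a$ is greater than or equal to every entry of the bottom row, append a new column consisting of $a$ at the right end; otherwise, let $z$ be the leftmost bottom-row entry with $z>a$ and put $a$ in a new box at the bottom of the column of $z$ (the previous entries of that column move up one box). For $w=w_1\cdots w_k$, $\mathfrak{R}_\ell(w)$ is obtained by starting with the empty tableau and right-inserting $w_1,\dots,w_k$ in order. The monoid $\mathrm{lps}_n$ is the quotient of the free monoid $\mathcal{A}_n^*$ by the congruence $u\equiv v\iff\mathfrak{R}_\ell(u)=\mathfrak{R}_\ell(v)$. *)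

(* Defs.v *)
From mathcomp Require Import all_boot.
Set Implicit Arguments. Unset Strict Implicit. Unset Printing Implicit Defensive.

Definition word (n : nat) (w : seq nat) : bool := all (fun a => (0 < a <= n)%N) w.

(* An lPS tableau is a sequence of columns (left to right); each column is
   stored as the list of its entries from BOTTOM to TOP (so the head of a
   column is its bottom entry). *)
Definition is_lPS (T : seq (seq nat)) : bool :=
  all (fun c => (c != [::]) && sorted (fun x y => (x < y)%N) c) T
  && sorted leq (map (head 0%N) T).

Fixpoint rins (T : seq (seq nat)) (a : nat) : seq (seq nat) :=
  match T with
  | [::] => [:: [:: a]]
  | c :: T' => if (a < head 0%N c)%N then (a :: c) :: T' else c :: rins T' a
  end.

Definition Rl (w : seq nat) : seq (seq nat) := foldl rins [::] w.

Definition lps_equiv (u v : seq nat) : Prop := Rl u = Rl v.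

Inductive cong_gen (X : eqType) (R : seq (seq X * seq X)) : seq X -> seq X -> Prop :=
  | cg_rel : forall p q l r, (l, r) \in R -> cong_gen R (p ++ l ++ q) (p ++ r ++ q)
  | cg_refl : forall u, cong_gen R u u
  | cg_sym : forall u v, cong_gen R u v -> cong_gen R v u
  | cg_trans : forall u v w, cong_gen R u v -> cong_gen R v w -> cong_gen R u w.

(* The homomorphism X^* -> A_n^* (composed with the projection onto lps_n)
   determined by images g i of the generators. *)
Definition hom_ext (k : nat) (g : 'I_k -> seq nat) (x : seq 'I_k) : seq nat :=
  flatten (map g x).

(* The isomorphism is induced by a monoid homomorphism X^* -> lps_n
   (given by words g i over A_n representing the images of generators), which
   is surjective and whose kernel congruence is exactly R^#. *)
Definition lps_finitely_presented (n : nat) : Prop :=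
  exists (k : nat) (R : seq (seq 'I_k * seq 'I_k)) (g : 'I_k -> seq nat),
    [/\ (forall i, word n (g i)),
        (forall w, word n w -> exists x, lps_equiv (hom_ext g x) w) &
        (forall x y, lps_equiv (hom_ext g x) (hom_ext g y) <-> cong_gen R x y)].

(* Main.v *)
Require Import Defs.
From mathcomp Require Import all_boot.
Set Implicit Arguments. Unset Strict Implicit. Unset Printing Implicit Defensive.

Lemma rins_skip (V V' : seq (seq nat)) c :
  all (fun col => head 0 col <= c) V -> rins (V ++ V') c = V ++ rins V' c.
Proof.
elim: V => //= col V IH /andP [H1 H2].
by rewrite ltnNge H1 /= IH.
Qed.

Lemma foldl_skip (V V' : seq (seq nat)) w :
  (forall c, c \in w -> all (fun col => head 0 col <= c) V) ->
  foldl rins (V ++ V') w = V ++ foldl rins V' w.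
Proof.
elim: w V' => //= c w IH V' H.
rewrite rins_skip ?H ?mem_head // IH // => d Hd; apply: H; by rewrite in_cons Hd orbT.
Qed.

Lemma rins_split (T : seq (seq nat)) x a : a < x ->
  exists V1 Y V2, [/\ rins T x = V1 ++ Y :: V2,
     all (fun col => head 0 col <= a) V1, a < head 0 Y & head 0 Y <= x].
Proof.
move=> ax; elim: T => [|c T IH] /=.
  by exists [::], [:: x], [::]; split.
case: ifP => hx.
  by exists [::], (x :: c), T; split.
case: (leqP (head 0 c) a) => hca.
  have [V1 [Y [V2 [E H1 H2 H3]]]] := IH.
  by exists (c :: V1), Y, V2; rewrite E /= hca H1; split.
exists [::], c, (rins T x); split => //.
by rewrite leqNgt hx.
Qed.

Lemma act (T : seq (seq nat)) x a w : a < x -> all (leq x) w ->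
  foldl rins T (x :: w ++ [:: a]) = foldl rins T (x :: a :: w).
Proof.
move=> ax /allP hw /=.
have [V1 [Y [V2 [E H1 H2 H3]]]] := rins_split T ax.
have H1' : forall c, a <= c -> all (fun col => head 0 col <= c) V1.
  move=> c ac; apply/allP => col /(allP H1) h; exact: (leq_trans h).
have eL : rins (V1 ++ Y :: V2) a = V1 ++ (a :: Y) :: V2.
  by rewrite rins_skip //= H2.
rewrite E foldl_cat /= eL.
have sk : forall Z, head 0 Z <= x -> foldl rins (V1 ++ Z :: V2) w = (V1 ++ [:: Z]) ++ foldl rins V2 w.
  move=> Z hZ; rewrite -cat1s catA foldl_skip // => c /hw hc.
  by rewrite all_cat /= andbT (leq_trans hZ hc) H1' // (leq_trans (ltnW ax) hc).
rewrite sk // sk ?(ltnW ax) // -catA /= rins_skip //= H2; by rewrite -catA.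
Qed.

Definition fO n (i : 'I_n) : nat := (val i).+1.
Definition gO n (i : 'I_n) : seq nat := [:: fO i].

Lemma hom_map n (x : seq 'I_n) : hom_ext (@gO n) x = map (@fO n) x.
Proof. by elim: x => //= i x IH; rewrite /hom_ext /= in IH *; rewrite IH. Qed.

Fixpoint subs (T : Type) (s : seq T) : seq (seq T) :=
  if s is x :: s' then [seq x :: t | t <- subs s'] ++ subs s' else [:: [::]].

Lemma mem_subs (T : eqType) (s t : seq T) : subseq t s -> t \in subs s.
Proof.
elim: s t => [|x s IH] [|y t] //=.
- move=> _; by rewrite mem_cat IH ?orbT // sub0seq.
- case: eqP => [-> H|_ H]; rewrite mem_cat.
    by rewrite (map_f (cons x) (IH _ H)).
  by rewrite IH ?orbT.
Qed.

Definition W n : seq (seq 'I_n) := [seq rev c | c <- subs (enum 'I_n)].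

Definition okt n (t : 'I_n * 'I_n * seq 'I_n) : bool :=
  (t.1.2 < t.1.1) && all (fun y : 'I_n => t.1.1 <= y) t.2.
Definition relt n (t : 'I_n * 'I_n * seq 'I_n) : seq 'I_n * seq 'I_n :=
  (t.1.1 :: t.2 ++ [:: t.1.2], t.1.1 :: t.1.2 :: t.2).
Definition Rn n : seq (seq 'I_n * seq 'I_n) :=
  map (@relt n) (filter (@okt n)
    [seq (xa, w) | xa <- [seq (x, a) | x <- enum 'I_n, a <- enum 'I_n], w <- W n]).

Lemma Rn_mem n l r : (l, r) \in Rn n -> exists (x a : 'I_n) w,
  [/\ a < x, all (fun y : 'I_n => x <= y) w, l = x :: w ++ [:: a] & r = x :: a :: w].
Proof.
case/mapP => [[[x a] w]]; rewrite mem_filter /okt /relt /= => /andP [/andP [h1 h2] _] [-> ->].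
by exists x, a, w.
Qed.

Lemma Rn_in n (x a : 'I_n) w : a < x -> all (fun y : 'I_n => x <= y) w -> w \in W n ->
  (x :: w ++ [:: a], x :: a :: w) \in Rn n.
Proof.
move=> h1 h2 h3.
apply/mapP; exists (x, a, w) => //.
rewrite mem_filter /okt /= h1 h2 /=.
apply: (allpairs_f (fun xa w => (xa, w))) => //.
by apply: (allpairs_f (fun x a => (x, a))); rewrite mem_enum.
Qed.

Lemma dir1 n (x y : seq 'I_n) : cong_gen (Rn n) x y -> Rl (map (@fO n) x) = Rl (map (@fO n) y).
Proof.
elim => //; last by move=> u v w _ -> _ ->.
move=> p q l r /Rn_mem [x0 [a [w [h1 h2 -> ->]]]].
rewrite /Rl !map_cat !foldl_cat; congr foldl.
rewrite /= map_cat /=; apply: act; first by rewrite /fO ltnS.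
by rewrite all_map; apply: sub_all h2 => z; rewrite /= /fO ltnS.
Qed.

Fixpoint rinsO n (T : seq (seq 'I_n)) (a : 'I_n) : seq (seq 'I_n) :=
  match T with
  | [::] => [:: [:: a]]
  | c :: T' => if (val a < val (head a c)) then (a :: c) :: T' else c :: rinsO T' a
  end.

Definition RlO n (x : seq 'I_n) := foldl (@rinsO n) [::] x.

Lemma rinsO_map n (T : seq (seq 'I_n)) a :
  map (map (@fO n)) (rinsO T a) = rins (map (map (@fO n)) T) (fO a).
Proof.
elim: T => //= c T IH.
case: c => [|h t] /=; first by rewrite ltnn /= IH.
rewrite /fO ltnS; case: ifP => //= _; by rewrite IH.
Qed.

Lemma RlO_map n (x : seq 'I_n) : map (map (@fO n)) (RlO x) = Rl (map (@fO n) x).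
Proof.
rewrite /RlO /Rl; have : map (map (@fO n)) [::] = [::] by [].
elim: x [::] [::] => //= a x IH T T' E.
by apply: IH; rewrite rinsO_map E.
Qed.

Lemma fO_inj n : injective (@fO n).
Proof. by move=> i j [] /val_inj. Qed.

Lemma rins_path T a b : b <= a -> path leq b (map (head 0) T) ->
  path leq b (map (head 0) (rins T a)).
Proof.
elim: T b => [|c T IH] b ba /=; first by rewrite ba.
case/andP => bc hp; case: ifP => /= ac.
  rewrite ba /=; case: (map _ T) hp => //= h s /andP [h1 h2].
  by rewrite (leq_trans (ltnW ac) h1) h2.
apply/andP; split => //; apply: IH => //; by rewrite leqNgt ac.
Qed.

Lemma rins_cols T a : all (fun c => (c != [::]) && sorted ltn c) T ->
  all (fun c => (c != [::]) && sorted ltn c) (rins T a).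
Proof.
elim: T => [|c T IH] //= /andP [hc hT]; case: ifP => /= ac.
  rewrite hT andbT; case: c hc ac => [|h t] // /andP [_ hs] ac /=; by rewrite /= ac.
by apply/andP; split => //; apply: IH.
Qed.

Lemma sorted0 s : sorted leq s = path leq 0 s.
Proof. by case: s. Qed.

Lemma Rl_lPS w : is_lPS (Rl w).
Proof.
rewrite /Rl; have : is_lPS [::] by [].
elim: w [::] => //= a w IH T /andP [h1 h2]; apply: IH.
rewrite /is_lPS rins_cols // sorted0 rins_path // -sorted0.
exact: h2.
Qed.

Lemma cong_ctx (X : eqType) (R : seq (seq X * seq X)) p q u v :
  cong_gen R u v -> cong_gen R (p ++ u ++ q) (p ++ v ++ q :> seq X).
Proof.
elim.
- move=> p0 q0 l r H.
  have e : forall m, p ++ (p0 ++ m ++ q0) ++ q = (p ++ p0) ++ m ++ (q0 ++ q).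
    by move=> m; rewrite !catA.
  by rewrite !e; apply: cg_rel.
- by move=> w; apply: cg_refl.
- by move=> w1 w2 _ H; apply: cg_sym.
- by move=> w1 w2 w3 _ H1 _ H2; apply: cg_trans H2.
Qed.

Definition readO n (T : seq (seq 'I_n)) : seq 'I_n := flatten (map rev T).

Lemma subseq_enum n (c : seq 'I_n) : sorted ltn (map (@fO n) c) -> subseq c (enum 'I_n).
Proof.
rewrite sorted_map => hs.
have hs' : sorted (fun x y : 'I_n => x < y) c.
  by apply: sub_sorted hs => x y; rewrite /relpre /fO /= ltnS.
have tr : transitive (fun x y : 'I_n => x < y) by move=> x y z; apply: ltn_trans.
have ir : irreflexive (fun x y : 'I_n => x < y) by move=> x; rewrite ltnn.
have se : sorted (fun x y : 'I_n => x < y) (enum 'I_n).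
  by have := iota_ltn_sorted 0 n; rewrite -val_enum_ord sorted_map.
have -> : c = filter (mem c) (enum 'I_n).
  apply: (irr_sorted_eq tr ir) => //; first exact: sorted_filter.
  by move=> z; rewrite mem_filter mem_enum andbT.
exact: filter_subseq.
Qed.

Lemma move n (a : 'I_n) (T2 : seq (seq 'I_n)) (x : 'I_n) (p : seq 'I_n) : a < x ->
  all (fun c => (map (@fO n) c != [::]) && sorted ltn (map (@fO n) c)) T2 ->
  path leq (fO x) (map (head 0) (map (map (@fO n)) T2)) ->
  cong_gen (Rn n) (p ++ x :: readO T2 ++ [:: a]) (p ++ x :: a :: readO T2).
Proof.
elim: T2 x p => [|c T3 IH] x p ax /=; first by move=> _ _; apply: cg_refl.
case: c => [|h t] //= /andP [hs hT] /andP [xh hp].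
have xh' : x <= h by rewrite /fO ltnS in xh.
have ah : a < h by apply: leq_trans xh'.
have hall : all (fun y : 'I_n => x <= y) (rcons (rev t) h).
  rewrite all_rcons xh' all_rev /=.
  have := order_path_min ltn_trans hs; rewrite all_map => H.
  apply: sub_all H => y; rewrite /= /fO ltnS => hy; exact: leq_trans (ltnW hy).
have hW : rcons (rev t) h \in W n.
  rewrite -rev_cons; apply: map_f; apply: mem_subs; exact: subseq_enum.
have := IH h (p ++ x :: rev t) ah hT hp.
have e1 : (p ++ x :: rev t) ++ h :: readO T3 ++ [:: a] = p ++ x :: (rcons (rev t) h ++ readO T3) ++ [:: a].
  by rewrite -catA /= -cats1 -!catA.
have e2 : (p ++ x :: rev t) ++ h :: a :: readO T3 = p ++ (x :: rcons (rev t) h ++ [:: a]) ++ readO T3.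
  by rewrite -catA /= -cats1 -!catA.
have e3 : p ++ x :: a :: rcons (rev t) h ++ readO T3 = p ++ (x :: a :: rcons (rev t) h) ++ readO T3.
  by [].
rewrite /readO /= rev_cons -/(readO T3) e1 e2 e3 => H1.
apply: (cg_trans H1); apply: cg_rel; exact: Rn_in.
Qed.

Lemma stepO n (T : seq (seq 'I_n)) (a : 'I_n) : is_lPS (map (map (@fO n)) T) ->
  cong_gen (Rn n) (readO T ++ [:: a]) (readO (rinsO T a)).
Proof.
elim: T => [|c T IH]; first by move=> _; apply: cg_refl.
rewrite /is_lPS /= => /andP [/andP [hc hT] hp].
have hp' : path leq (head 0 (map (@fO n) c)) (map (head 0) (map (map (@fO n)) T)) by [].
have hT' : is_lPS (map (map (@fO n)) T).
  by rewrite /is_lPS hT (path_sorted hp').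
case: ifP => ac.
  case: c hc ac hp' {hp} => [|h t] // /andP [_ hs] /= ac hp'.
  have hT2 : all (fun c => (map (@fO n) c != [::]) && sorted ltn (map (@fO n) c)) T.
    by move: hT; rewrite all_map => H; apply/allP => z hz; exact: (allP H z hz).
  have := move (rev t) ac hT2 hp'.
  rewrite /readO /= !rev_cons -/(readO T) -!cats1 -!catA /=.
  exact: id.
rewrite /readO /= -/(readO T) -/(readO (rinsO T a)).
rewrite -catA.
by have := cong_ctx (rev c) [::] (IH hT'); rewrite !cats0.
Qed.

Lemma nfO n (x : seq 'I_n) : cong_gen (Rn n) x (readO (RlO x)).
Proof.
elim/last_ind: x => [|x a IH]; first exact: cg_refl.
rewrite /RlO foldl_rcons -/(RlO x).
apply: (cg_trans (v := readO (RlO x) ++ [:: a])).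
  have := cong_ctx [::] [:: a] IH; by rewrite /= cats1.
apply: stepO; rewrite RlO_map; exact: Rl_lPS.
Qed.

Theorem proposition3p24 (n : nat) : lps_finitely_presented n.
Proof.
exists n, (Rn n), (@gO n); split.
- by move=> i; rewrite /word /gO /fO /= ltn_ord.
- move=> w hw; exists (pmap (fun a => insub a.-1) w).
  rewrite hom_map /lps_equiv; congr Rl.
  elim: w hw => //= b w IH /andP [/andP [b0 bn] hw].
  case: insubP => [i _ hi|]; last first.
    move/negP; case; rewrite -ltnS prednK //.
  by rewrite /= IH // /fO hi prednK.
- move=> x y; rewrite /lps_equiv !hom_map; split; last exact: dir1.
  rewrite -!RlO_map => /(inj_map (inj_map (@fO_inj n))) E.
  apply: (cg_trans (nfO x)); rewrite E; apply: cg_sym; exact: nfO.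
Qed.
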